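(* In the standing setup with duals, the element $\check 1_e\in\check A_e$ is invariant under the dual action $\check\varphi$ of $G$ if and only if $\sigma(h)(\sigma(j)+1)\equiv 0\pmod 2$ for all $h\in G$ (equivalently, if and only if $GM_f$ is $G$-Euler in the sense that $\varphi(h^{-1}j)|_{A_h}=\exp(2\pi i\mathcal{Q})|_{A_h}$ for all $h$).
   Context: Standing setup. Let $f\in\mathbb{C}[z_1,\dots,z_n]$ be quasi-homogeneous with isolated singularity at $0$ and weights $q_i\in(0,1)$; $M_f$ is its Milnor ring graded by $\deg z_i=q_i$, and $d=\sum_i(1-2q_i)$. $G$ is a finite abelian group with diagonal representation $\rho$ leaving $f$ invariant, $\rho(g)=\mathrm{diag}(e^{2\pi i\nu_i(g)})$, $\nu_i(g)\in[0,1)$; $\mathrm{Fix}(g)$ is spanned by the $z_i$ with $\nu_i(g)=0$; $A_g=M_{f|_{\mathrm{Fix}(g)}}$ (equal to $\mathbb{C}$ if $\mathrm{Fix}(g)=0$) with elements $a1_g$; $GM_f=\bigoplus_gA_g$. Fix $\sigma\in\mathrm{Hom}(G,\mathbb{Z}/2\mathbb{Z})$; action $\varphi(h)(a1_g)=(-1)^{\sigma(h)\sigma(g)}\det(\rho(h))^{-1}\det(\rho(h)|_{\mathrm{Fix}(g)})\,a(\rho(h)z)\,1_g$; character $\chi(h)=(-1)^{\sigma(h)}\det\rho(h)$. Assume $j\in G$ with $\rho(j)=\mathrm{diag}(e^{2\pi iq_1},\dots,e^{2\pi iq_n})$. Dual: $\check A_g:=A_{gj^{-1}}$, $\check{GM_f}=\bigoplus_g\check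 A_g$; write $a\check1_g$ for the element $a1_{gj^{-1}}$ regarded in $\check A_g$; dual action $\check\varphi(h)(a\check1_g)=\chi(h)\cdot(\varphi(h)(a1_{gj^{-1}}))$ regarded in $\check A_g$. Shift $s_g=\sum_{i:\nu_i(g)\neq 0}(\nu_i(g)-q_i)$, $\mathcal{Q}(a1_h)=(\deg a+s_h)a1_h$. *)

(* Defs.v *)
From HB Require Import structures.
From mathcomp Require Import all_boot all_order all_algebra all_fingroup.
From mathcomp Require Import reals trigo.
From mathcomp.real_closed Require Import complex.
From mathcomp Require Import mpoly.

Set Implicit Arguments.
Unset Strict Implicit.
Unset Printing Implicit Defensive.

Import GRing.Theory Num.Theory.
Local Open Scope ring_scope.

Section GEuler.
Variable R : realType.
Local Notation C := (R[i]).

Definition e2pi (x : R) : C := Complex (cos (2 * pi * x)) (sin (2 * pi * x)).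

Variable n : nat.
Variable q : 'I_n -> R.

Definition wdeg (m : 'X_{1..n}) : R := \sum_(i < n) (m i)%:R * q i.

Definition qhomog (d : R) (a : {mpoly C[n]}) : Prop :=
  forall m, m \in msupp a -> wdeg m = d.

Variable gT : finGroupType.
Variable nu : gT -> 'I_n -> R.

Definition rho (g : gT) : 'M[C]_n := diag_mx (\row_i e2pi (nu g i)).

Definition pact (g : gT) (a : {mpoly C[n]}) : {mpoly C[n]} :=
  comp_mpoly [tuple (e2pi (nu g i))%:MP * 'X_i | i < n] a.

Definition isfix (g : gT) (i : 'I_n) : bool := nu g i == 0.

Definition inFix (g : gT) (a : {mpoly C[n]}) : Prop :=
  forall m, m \in msupp a -> forall i, ~~ isfix g i -> m i = 0%N.

Definition fres (f : {mpoly C[n]}) (g : gT) : {mpoly C[n]} :=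
  comp_mpoly [tuple (if isfix g i then 'X_i else 0) | i < n] f.

(* equality in the Milnor ring A_g = M_{f|Fix(g)} of (representatives of)
   elements a, b (polynomials in the Fix(g) variables): a - b lies in the
   Jacobian ideal generated by the partials d(f|Fix(g))/dz_i, i in Fix(g). *)
Definition eqA (f : {mpoly C[n]}) (g : gT) (a b : {mpoly C[n]}) : Prop :=
  exists c : 'I_n -> {mpoly C[n]},
    a - b = \sum_(i < n | isfix g i) c i * mderiv i (fres f g).

Definition detFix (h g : gT) : C := \prod_(i < n | isfix g i) e2pi (nu h i).

Variable sigma : gT -> bool.

Definition sgn (b : bool) : C := (-1) ^+ b.

(* phi(h)(a 1_g), returned as the representative in A_g *)
Definition phi (h g : gT) (a : {mpoly C[n]}) : {mpoly C[n]} :=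
  (sgn (sigma h && sigma g) * (\det (rho h))^-1 * detFix h g) *: pact h a.

Definition chi (h : gT) : C := sgn (sigma h) * \det (rho h).

(* dual action: check-phi(h)(a check1_g) = chi(h) phi(h)(a 1_{g j^-1}),
   an element of check A_g = A_{g j^-1} *)
Definition dphi (j h g : gT) (a : {mpoly C[n]}) : {mpoly C[n]} :=
  chi h *: phi h (g * j^-1)%g a.

Definition shift (g : gT) : R := \sum_(i < n | ~~ isfix g i) (nu g i - q i).

(* G-Euler: phi(h^-1 j)|_{A_h} = exp(2 pi i Q)|_{A_h} for all h in G, where
   exp(2 pi i Q) acts on the class of a quasi-homogeneous a of degree d by
   e(d + s_h). *)
Definition GEuler (f : {mpoly C[n]}) (G : {set gT}) (j : gT) : Prop :=
  forall h, h \in G -> forall (d : R) (a : {mpoly C[n]}),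
    inFix h a -> qhomog d a ->
    eqA f h (phi (h^-1 * j)%g h a) (e2pi (d + shift h) *: a).

End GEuler.

(* Main.v *)
Require Import Defs.
From HB Require Import structures.
From mathcomp Require Import all_boot all_order all_algebra all_fingroup.
From mathcomp Require Import reals trigo.
From mathcomp.real_closed Require Import complex.
From mathcomp Require Import mpoly.
From mathcomp Require Import ring lra.
Import Order.TTheory GRing.Theory Num.Theory.
Local Open Scope ring_scope.

Section E.
Variable R : realType.
Lemma e2piD (x y : R) : e2pi (x + y) = e2pi x * e2pi y.
Proof.
rewrite /e2pi mulrDr cosD sinD.
simpl. by congr Complex; ring.
Qed.
Lemma e2pi0 : e2pi (0:R) = 1.
Proof. by rewrite /e2pi mulr0 cos0 sin0. Qed.
Lemma e2pi_neq0 (x : R) : e2pi x != 0.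
Proof.
apply/negP=> /eqP H. have := cos2Dsin2 (2 * pi * x).
move: H; rewrite /e2pi => -[-> ->]. rewrite expr0n /= addr0 => /eqP; by rewrite eq_sym oner_eq0.
Qed.
Lemma e2pi_ne1 (x : R) : 0 < x < 1 -> e2pi x != 1.
Proof.
move=> /andP[x0 x1]; apply/negP=> /eqP[].
have -> : 2 * pi * x = (pi * x) + (pi * x) by ring.
rewrite cosD => H _.
have : 0 < sin (pi * x).
  apply: sin_gt0_pi; apply/andP; split; first by rewrite mulr_gt0 // pi_gt0.
  by rewrite -{2}(mulr1 pi) ltr_pM2l // pi_gt0.
have := cos2Dsin2 (pi * x). move=> h1 h2.
have : cos (pi * x) ^+ 2 - sin (pi * x) ^+ 2 = 1 by rewrite -H; ring.
move=> h3. have : sin (pi*x) ^+2 = 0 by lra.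
move/eqP; rewrite sqrf_eq0 => /eqP h4; by rewrite h4 ltxx in h2.
Qed.
Lemma e2piN (x : R) : e2pi (- x) = (e2pi x)^-1.
Proof.
apply: (mulIf (e2pi_neq0 x)); rewrite -e2piD addNr e2pi0 mulVf //; exact: e2pi_neq0.
Qed.
Lemma e2pi_sum (I : Type) (r : seq I) (P : pred I) (F : I -> R) :
  e2pi (\sum_(i <- r | P i) F i) = \prod_(i <- r | P i) e2pi (F i).
Proof. by apply: (big_morph _ e2piD e2pi0). Qed.
Lemma e2pi_natmul (k : nat) (x : R) : e2pi (k%:R * x) = e2pi x ^+ k.
Proof.
elim: k => [|k IH]; first by rewrite mul0r e2pi0 expr0.
by rewrite -addn1 natrD mulrDl mul1r e2piD IH exprD expr1.
Qed.
End E.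
Section MP.
Variable R : realType.
Variable n : nat.
Local Notation C := (R[i]).

Lemma compL (c : 'I_n -> C) (p : {mpoly C[n]}) :
  comp_mpoly [tuple (c i)%:MP * 'X_i | i < n] p
  = \sum_(m <- msupp p) (p@_m * \prod_i c i ^+ m i) *: 'X_[m].
Proof.
rewrite comp_mpolyE; apply: eq_bigr => m _.
rewrite -scalerA; congr (_ *: _).
rewrite (eq_bigr (fun i => (c i ^+ m i)%:MP * 'X_i ^+ m i)); last first.
  by move=> i _; rewrite tnth_mktuple exprMn rmorphXn.
by rewrite big_split /= -rmorph_prod mul_mpolyC mpolyXE_id.
Qed.

Lemma ev0 (p : {mpoly C[n]}) : p.@[fun=> 0] = p@_0%MM.
Proof.
rewrite mevalE [in RHS](mpolyE p) raddf_sum /=; apply: eq_bigr => m _.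
rewrite mcoeffZ mcoeffX; congr (_ * _).
have [->|nz] := eqVneq m 0%MM.
  by rewrite big1 // => i _; rewrite mnm0E expr0.
have [i hi] : exists i, m i != 0%N.
  apply/existsP; apply: contraR nz => /existsPn H; apply/eqP/mnmP => i.
  by rewrite mnm0E; apply/eqP; move: (H i); rewrite negbK.
by rewrite (bigD1 i) //= expr0n (negPf hi) mul0r.
Qed.
Lemma wdegU (q : 'I_n -> R) i : wdeg q U_(i)%MM = q i.
Proof.
rewrite /wdeg (bigD1 i) //= mnm1E eqxx mul1r big1 ?addr0 //.
by move=> k /negPf ki; rewrite mnm1E eq_sym ki mul0r.
Qed.

Lemma dres0 (q : 'I_n -> R) (hq : forall k, q k < 1) (f : {mpoly C[n]})
  (hf : qhomog q 1 f) (gT : finGroupType) (nu : gT -> 'I_n -> R) g i :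
  (mderiv i (fres nu f g)).@[fun=> 0] = 0.
Proof.
have ht : [tuple (if isfix nu g k then 'X_k else 0) | k < n] =
   [tuple ((if isfix nu g k then 1 else 0) : C)%:MP * 'X_k | k < n] :> n.-tuple {mpoly C[n]}.
  apply: eq_mktuple => k.
  by case: ifP => _; rewrite ?rmorph1 ?rmorph0 ?mul1r ?mul0r.
rewrite /fres ht.
rewrite ev0 mcoeff_deriv add0m mnm0E compL raddf_sum /=.
apply: big1_seq => m /andP[_ mf].
rewrite mcoeffZ mcoeffX; case: eqP => [em|_]; last by rewrite mulr0.
have := hf m mf; rewrite em wdegU => e; have := hq i; by rewrite e ltxx.
Qed.
Lemma pact_const (gT : finGroupType) (nu : gT -> 'I_n -> R) k (a : {mpoly C[n]}) (e : C) :
  (forall m, m \in msupp a -> \prod_i e2pi (nu k i) ^+ m i = e) ->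
  pact nu k a = e *: a.
Proof.
move=> H; rewrite /pact compL [in RHS](mpolyE a) scaler_sumr.
apply: eq_big_seq => m hm; by rewrite H // scalerA mulrC.
Qed.

Lemma msupp1_0 m : m \in msupp (1 : {mpoly C[n]}) -> m = 0%MM.
Proof.
move=> hm; have : (1 : {mpoly C[n]})@_m != 0 by rewrite mcoeff_eq0 negbK.
by rewrite mcoeff1; case: (m =P 0%MM) => // _; rewrite eqxx.
Qed.

Lemma pact1 (gT : finGroupType) (nu : gT -> 'I_n -> R) k :
  pact nu k (1 : {mpoly C[n]}) = 1.
Proof.
rewrite (@pact_const _ _ _ _ 1) ?scale1r // => m /msupp1_0 ->.
by rewrite big1 // => i _; rewrite mnm0E expr0.
Qed.
End MP.
Section Main.
Variable R : realType.
Variable n : nat.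
Variable q : 'I_n -> R.
Variable gT : finGroupType.
Variable G : {group gT}.
Variable nu : gT -> 'I_n -> R.
Variable j : gT.
Hypothesis hq : forall k, 0 < q k < 1.
Hypothesis hrho : {in G &, forall g h, rho nu (g * h)%g = rho nu g *m rho nu h}.
Hypothesis hj : j \in G.
Hypothesis hjrho : rho nu j = diag_mx (\row_k e2pi (q k)).

Lemma rhoE g i : rho nu g i i = e2pi (nu g i).
Proof. by rewrite /rho mxE eqxx mulr1n mxE. Qed.

Lemma rhoM g h i : g \in G -> h \in G ->
  e2pi (nu (g * h)%g i) = e2pi (nu g i) * e2pi (nu h i).
Proof.
move=> gG hG; rewrite -!rhoE hrho // /rho mul_diag_mx !mxE eqxx !mulr1n.
done.
Qed.
Lemma rho1 i : e2pi (nu 1%g i) = 1.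
Proof.
have := rhoM 1%g 1%g i (group1 G) (group1 G); rewrite mulg1 => /eqP.
rewrite -{1}[e2pi _]mulr1 eq_sym => /eqP /mulfI -> //; exact: e2pi_neq0.
Qed.

Lemma rhoV g i : g \in G -> e2pi (nu g^-1%g i) = (e2pi (nu g i))^-1.
Proof.
move=> gG; apply: (@mulIf _ (e2pi (nu g i))); first exact: e2pi_neq0.
by rewrite -rhoM ?groupV // mulVg rho1 mulVf // e2pi_neq0.
Qed.

Lemma rhoj i : e2pi (nu j i) = e2pi (q i).
Proof. by rewrite -rhoE hjrho mxE eqxx mulr1n mxE. Qed.

Lemma fixjV i : isfix nu (j^-1)%g i = false.
Proof.
apply/negP => /eqP H.
have := rhoV j i hj; rewrite H e2pi0 rhoj => /eqP; rewrite eq_sym invr_eq1.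
apply/negP; apply: e2pi_ne1; exact: hq.
Qed.

Lemma detrho g : \det (rho nu g) = \prod_i e2pi (nu g i).
Proof. by rewrite /rho det_diag; apply: eq_bigr => i _; rewrite mxE. Qed.

Lemma detrho_neq0 g : \det (rho nu g) != 0.
Proof. rewrite detrho prodf_seq_neq0; apply/allP => i _; apply/implyP => _; exact: e2pi_neq0. Qed.
Variable sigma : gT -> bool.
Hypothesis hsig : {in G &, forall g h, sigma (g * h)%g = sigma g (+) sigma h}.

Lemma sig1 : sigma 1%g = false.
Proof. by have := @hsig 1%g 1%g (group1 G) (group1 G); rewrite mulg1 addbb. Qed.

Lemma sigV g : g \in G -> sigma g^-1%g = sigma g.
Proof.
move=> gG; have := @hsig g g^-1%g gG (groupVr gG); rewrite mulgV sig1.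
by case: (sigma g); case: (sigma g^-1%g).
Qed.

Lemma phi_calc h d (a : {mpoly R[i][n]}) : h \in G -> inFix nu h a -> qhomog q d a ->
  phi nu sigma (h^-1 * j)%g h a
  = (sgn R (sigma h && ~~ sigma j) * e2pi (d + shift q nu h)) *: a.
Proof.
move=> hG hfix hqh.
set k := (h^-1 * j)%g.
have kG : k \in G by rewrite groupM ?groupV.
have hk : (h * k)%g = j by rewrite /k mulKVg.
have ent i : e2pi (nu h i) * e2pi (nu k i) = e2pi (q i).
  by rewrite -rhoM // hk rhoj.
have entf i : isfix nu h i -> e2pi (nu k i) = e2pi (q i).
  by move=> /eqP hi; rewrite -ent hi e2pi0 mul1r.
have hs : sigma k && sigma h = sigma h && ~~ sigma j.
  rewrite /k hsig ?groupV // sigV //.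
  by case: (sigma h); case: (sigma j).
have hdet : (\det (rho nu k))^-1 * detFix nu k h = e2pi (shift q nu h).
  rewrite detrho (bigID (isfix nu h)) /= /detFix invfM mulrAC mulVf ?mul1r; last first.
    by rewrite prodf_seq_neq0; apply/allP => i _; apply/implyP => _; exact: e2pi_neq0.
  have Bnz : \prod_(i < n | ~~ isfix nu h i) e2pi (nu k i) != 0.
    by rewrite prodf_seq_neq0; apply/allP => i _; apply/implyP => _; exact: e2pi_neq0.
  apply: (mulfI Bnz); rewrite mulfV // /shift e2pi_sum -big_split /=.
  rewrite big1 // => i _.
  by rewrite e2piD e2piN mulrA [e2pi (nu k i) * _]mulrC ent mulfV // e2pi_neq0.
have hp : pact nu k a = e2pi d *: a.
  apply: pact_const => m hm.
  rewrite -(hqh m hm) /wdeg e2pi_sum; apply: eq_bigr => i _.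
  rewrite e2pi_natmul.
  case fi: (isfix nu h i); first by rewrite entf.
  by rewrite (hfix m hm i) ?fi // !expr0.
rewrite /phi hp scalerA hs -(mulrA (sgn R _)) hdet e2piD.
by rewrite -mulrA [e2pi (shift _ _ _) * _]mulrC.
Qed.
Lemma dphi1 h : h \in G ->
  dphi nu sigma j h 1%g (1 : {mpoly R[i][n]})
  = (sgn R (sigma h) * sgn R (sigma h && sigma j)) *: 1.
Proof.
move=> hG; rewrite /dphi /phi /chi mul1g pact1 sigV // /detFix big_pred0; last first.
  by move=> i; exact: fixjV.
rewrite scalerA; congr (_ *: _).
have := detrho_neq0 h; set D := \det _ => Dnz.
by rewrite mulr1; field.
Qed.

Lemma m1neq1 : (-1 : R[i]) != 1.
Proof.
apply/negP => /eqP H.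
have : (1 : R[i]) + 1 == 0 by rewrite -{1}H addNr.
by rewrite -mulr2n pnatr_eq0.
Qed.

Lemma sgn_equiv a b :
  sgn R a * sgn R (a && b) = 1 <-> ((a * (b + 1)) %% 2 = 0)%N.
Proof.
case: a; case: b; rewrite /sgn /= ?expr0 ?expr1 ?mulr1 ?mul1r ?mulrNN ?mulr1 //.
split => // H; by move: m1neq1; rewrite H eqxx.
Qed.

Variable f : {mpoly R[i][n]}.
Hypothesis hfqh : qhomog q 1 f.

Lemma eqA_jV (s : R[i]) : eqA nu f (1 * j^-1)%g (s *: 1) 1 <-> s = 1.
Proof.
have E c : \sum_(i < n | isfix nu (1 * j^-1)%g i) c i * mderiv i (fres nu f (1 * j^-1)%g) = 0.
  by rewrite big_pred0 // => i; rewrite mul1g fixjV.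
split.
  case=> c; rewrite E => /eqP; rewrite subr_eq0 => /eqP /(congr1 (mcoeff 0%MM)).
  by rewrite mcoeffZ mcoeff1 eqxx mulr1.
by move=> ->; exists (fun=> 0); rewrite E scale1r subrr.
Qed.

Lemma part1 :
  (forall h, h \in G -> eqA nu f (1 * j^-1)%g (dphi nu sigma j h 1%g 1) 1)
   <-> (forall h, h \in G -> ((sigma h * (sigma j + 1)) %% 2 = 0)%N).
Proof.
split=> H h hG; have := H h hG.
  by rewrite dphi1 // eqA_jV sgn_equiv.
by rewrite dphi1 // eqA_jV sgn_equiv.
Qed.
Lemma part2 :
  (forall h, h \in G -> ((sigma h * (sigma j + 1)) %% 2 = 0)%N)
   <-> GEuler q nu sigma f G j.
Proof.
split.
  move=> H h hG d a hfix hqh; rewrite (phi_calc _ _ _ hG hfix hqh).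
  have -> : sigma h && ~~ sigma j = false.
    by move: (H h hG); case: (sigma h); case: (sigma j).
  rewrite /sgn expr0 mul1r; exists (fun=> 0).
  by rewrite subrr big1 // => i _; rewrite mul0r.
move=> HE h hG.
case sh: (sigma h); case sj: (sigma j) => //.
exfalso.
have h1fix : inFix nu h (1 : {mpoly R[i][n]}).
  by move=> m /msupp1_0 -> i _; rewrite mnm0E.
have h1qh : qhomog q 0 (1 : {mpoly R[i][n]}).
  by move=> m /msupp1_0 ->; rewrite /wdeg big1 // => i _; rewrite mnm0E mul0r.
have [c E] := HE h hG 0 1 h1fix h1qh.
move/(congr1 (meval (fun=> 0))): E.
rewrite (phi_calc _ _ _ hG h1fix h1qh) sh sj /= mevalB !mevalZ meval1 raddf_sum /= big1; last first.
  have hq' : forall k, q k < 1 by move=> k; case/andP: (hq k).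
  by move=> i _; rewrite mevalM (@dres0 R n q hq' f hfqh) mulr0.
rewrite /sgn expr1 !mulr1 mulN1r -opprD => /eqP; rewrite oppr_eq0 -mulr2n.
by rewrite mulrn_eq0 /= (negPf (e2pi_neq0 _ _)).
Qed.
End Main.
Theorem mainTheorem3 (R : realType) (n : nat) (q : 'I_n -> R)
  (f : {mpoly R[i][n]}) (gT : finGroupType) (G : {group gT})
  (nu : gT -> 'I_n -> R) (sigma : gT -> bool) (j : gT)
  (* weights in (0,1) *)
  (hq : forall k, 0 < q k < 1)
  (* f quasi-homogeneous of weighted degree 1 *)
  (hfqh : qhomog q 1 f)
  (* isolated singularity at 0 *)
  (hfiso : exists2 eps : R, 0 < eps &
     forall z : 'I_n -> R[i], (forall k, `|z k| < eps%:C%C) ->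
       (forall k, (mderiv k f).@[z] = 0) -> z = (fun=> 0))
  (* G finite abelian, rho diagonal representation with nu_i(g) in [0,1) *)
  (hG : abelian G)
  (hnu : forall g k, 0 <= nu g k < 1)
  (hrho : {in G &, forall g h, rho nu (g * h)%g = rho nu g *m rho nu h})
  (* rho leaves f invariant *)
  (hinv : {in G, forall g, pact nu g f = f})
  (* sigma in Hom(G, Z/2Z) *)
  (hsig : {in G &, forall g h, sigma (g * h)%g = sigma g (+) sigma h})
  (* the element j *)
  (hj : j \in G)
  (hjrho : rho nu j = diag_mx (\row_k e2pi (q k))) :
  ((* check 1_e (= 1 in A_{e j^-1}) is invariant under the dual action *)
   (forall h, h \in G ->
      eqA nu f (1 * j^-1)%g (dphi nu sigma j h 1%g 1) 1)
   <-> (forall h, h \in G -> ((sigma h * (sigma j + 1)) %% 2 = 0)%N))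
  /\
  ((forall h, h \in G -> ((sigma h * (sigma j + 1)) %% 2 = 0)%N)
   <-> GEuler q nu sigma f G j).
Proof.
split.
  by apply: part1.
by apply: part2.
Qed.
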